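(* Let $T=2^m$, $d\ge1$ and $u_{1:T}\in(\mathbb{R}^d)^T$. With the Haar coefficients and detail sequences defined in the context, for every scale-location pair $(j,l)$, $$\|\hat u^{(j,l)}\|_2=2^{-1/2}\sqrt{P^{(j,l)}\bar S^{(j,l)}},$$ and for every scale $j$, $$\sum_l\|\hat u^{(j,l)}\|_2\le 2^{-1/2}\sqrt{P^{(j)}\bar S^{(j)}}.$$
   Context: Haar features for $T=2^m$: for scale $j\in[1:m]$ and location $l\in[1:2^{-j}T]$, $h^{(j,l)}\in\mathbb{R}^T$ has $t$-th entry $1$ for $t\in[2^j(l-1)+1:2^j(l-1)+2^{j-1}]$, $-1$ for $t\in[2^j(l-1)+2^{j-1}+1:2^jl]$, and $0$ otherwise; normalized $\tilde h^{(j,l)}=2^{-j/2}h^{(j,l)}$. For $i\in[1:d]$, $u^{(i)}_{1:T}\in\mathbb{R}^T$ is the sequence of $i$-th coordinates of $u_1,\ldots,u_T$. Coefficient $\hat u^{(j,l)}\in\mathbb{R}^d$ has $i$-th entry $\langle\tilde h^{(j,l)},u^{(i)}_{1:T}\rangle$. Detail sequences $z^{(j,l)}\in(\mathbb{R}^d)^T$: $z^{(j,l)}_t=\hat u^{(j,l)}\tilde h^{(j,l)}_t$; $z^{(j)}=\sum_l z^{(j,l)}$. Statistics: $\bar S^{(j,l)}=\sum_{t=1}^T\|z^{(j,l)}_t\|_2$, $\bar S^{(j)}=\sum_{t=1}^T\|z^{(j)}_t\|_2$, $P^{(j,l)}=\sum_{t=2^j(l-1)+1}^{2^jl-1}\|z^{(j,l)}_{t+1}-z^{(j,l)}_t\|_2$,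 $P^{(j)}=\sum_l P^{(j,l)}$. *)

(* Defs.v *)
From mathcomp Require Import all_boot all_order all_algebra.
From mathcomp Require Import reals.
Set Implicit Arguments. Unset Strict Implicit. Unset Printing Implicit Defensive.
Import Order.TTheory GRing.Theory Num.Theory.
Local Open Scope ring_scope.

Section Haar.
Variable R : realType.
Variable d : nat.

Definition norm2 (x : 'rV[R]_d) : R := Num.sqrt (\sum_(i < d) x 0 i ^+ 2).

(* unnormalized Haar feature h^(j,l)_t, time index t is 1-based *)
Definition haar (j l t : nat) : R :=
  if (2 ^ j * (l - 1) + 1 <= t <= 2 ^ j * (l - 1) + 2 ^ (j - 1))%N then 1
  else if (2 ^ j * (l - 1) + 2 ^ (j - 1) + 1 <= t <= 2 ^ j * l)%N then -1
  else 0.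

Definition haarn (j l t : nat) : R := (Num.sqrt (2 ^+ j))^-1 * haar j l t.

Variable m : nat.
Variable u : nat -> 'rV[R]_d.   (* u_t for t in [1:T], T = 2^m *)

Definition T := (2 ^ m)%N.

Definition uhat (j l : nat) : 'rV[R]_d :=
  \row_i \sum_(1 <= t < T.+1) haarn j l t * u t 0 i.

Definition zdet (j l t : nat) : 'rV[R]_d := haarn j l t *: uhat j l.
Definition zscale (j t : nat) : 'rV[R]_d :=
  \sum_(1 <= l < (2 ^ (m - j)).+1) zdet j l t.

Definition Sbar (j l : nat) : R := \sum_(1 <= t < T.+1) norm2 (zdet j l t).
Definition Sbar_scale (j : nat) : R := \sum_(1 <= t < T.+1) norm2 (zscale j t).
Definition Pjl (j l : nat) : R :=
  \sum_(2 ^ j * (l - 1) + 1 <= t < 2 ^ j * l)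
     norm2 (zdet j l t.+1 - zdet j l t).
Definition Pscale (j : nat) : R := \sum_(1 <= l < (2 ^ (m - j)).+1) Pjl j l.

End Haar.

(* Main.v *)
Require Import Defs.
From mathcomp Require Import all_boot all_order all_algebra.
From mathcomp Require Import reals.
From mathcomp Require Import zify ring lra.
Import Order.TTheory GRing.Theory Num.Theory.
Set Implicit Arguments. Unset Strict Implicit. Unset Printing Implicit Defensive.
Local Open Scope ring_scope.

Section Aux.
Variable R : realType.

Definition hf (a h t : nat) : R :=
  if (a + 1 <= t <= a + h)%N then 1
  else if (a + h + 1 <= t <= a + h + h)%N then -1 else 0.

Lemma haarE (j l t : nat) : (1 <= j)%N -> (1 <= l)%N ->
  haar R j l t = hf (2 ^ j * (l - 1)) (2 ^ (j - 1)) t.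
Proof.
move=> hj hl.
have H2 : (2 ^ j = 2 ^ (j - 1) + 2 ^ (j - 1))%N.
  by case: j hj => // j' _; rewrite subn1 /= expnS mul2n addnn.
have E : (2 ^ j * l = 2 ^ j * (l - 1) + 2 ^ (j - 1) + 2 ^ (j - 1))%N.
  by rewrite -addnA -H2 -mulnSr subn1 prednK.
by rewrite /haar E.
Qed.

Lemma hf_sum_abs (a h p q : nat) : (1 <= h)%N -> (p <= a + 1)%N ->
  (a + h + h + 1 <= q)%N ->
  \sum_(p <= t < q) `|hf a h t| = (h + h)%:R.
Proof.
move=> h1 hp hq.
rewrite (big_cat_nat _ (n := (a + 1)%N)) //=; last lia.
rewrite (big_cat_nat _ (n := (a + h + h + 1)%N) (m := (a+1)%N) (p := q)) //=; try lia.
rewrite (@eq_big_nat _ _ _ p (a+1) _ (fun=> 0)); last first.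
  move=> t /andP[_ ht]; rewrite /hf.
  have -> : (a+1 <= t <= a+h)%N = false by lia.
  have -> : (a+h+1 <= t <= a+h+h)%N = false by lia.
  by rewrite normr0.
rewrite (@eq_big_nat _ _ _ (a+h+h+1) q _ (fun=> 0)); last first.
  move=> t /andP[ht _]; rewrite /hf.
  have -> : (a+1 <= t <= a+h)%N = false by lia.
  have -> : (a+h+1 <= t <= a+h+h)%N = false by lia.
  by rewrite normr0.
rewrite (@eq_big_nat _ _ _ (a+1) (a+h+h+1) _ (fun=> 1)); last first.
  move=> t /andP[ht1 ht2]; rewrite /hf.
  case: ifP => Hc; first by rewrite normr1.
  have -> : (a+h+1 <= t <= a+h+h)%N = true by lia.
  by rewrite normrN normr1.
rewrite !big1_eq add0r addr0 sumr_const_nat.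
by congr (_ *+ _); lia.
Qed.

Lemma hf_sum_diff (a h : nat) : (1 <= h)%N ->
  \sum_(a + 1 <= t < a + h + h) `|hf a h t.+1 - hf a h t| = 2.
Proof.
move=> h1.
rewrite (big_cat_nat _ (n := (a + h)%N)) //=; try lia.
rewrite (big_cat_nat _ (n := (a + h + 1)%N) (m := (a+h)%N) (p := (a+h+h)%N)) //=; try lia.
rewrite (@eq_big_nat _ _ _ (a+1) (a+h) _ (fun=> 0)); last first.
  move=> t /andP[ht1 ht2]; rewrite /hf.
  have -> : (a+1 <= t <= a+h)%N = true by lia.
  have -> : (a+1 <= t.+1 <= a+h)%N = true by lia.
  by rewrite subrr normr0.
rewrite (@eq_big_nat _ _ _ (a+h+1) (a+h+h) _ (fun=> 0)); last first.
  move=> t /andP[ht1 ht2]; rewrite /hf.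
  have -> : (a+1 <= t <= a+h)%N = false by lia.
  have -> : (a+1 <= t.+1 <= a+h)%N = false by lia.
  have -> : (a+h+1 <= t <= a+h+h)%N = true by lia.
  have -> : (a+h+1 <= t.+1 <= a+h+h)%N = true by lia.
  by rewrite subrr normr0.
rewrite !big1_eq add0r addr0 addn1 big_nat1 /hf.
have -> : (a+1 <= a+h <= a+h)%N = true by lia.
have -> : (a+1 <= (a+h).+1 <= a+h)%N = false by lia.
have -> : (a+h+1 <= (a+h).+1 <= a+h+h)%N = true by lia.
by rewrite -opprD normrN ger0_norm // addr_ge0 ?ler01.
Qed.


Lemma norm2_scale d (k : R) (v : 'rV[R]_d) : norm2 (k *: v) = `|k| * norm2 v.
Proof.
rewrite /norm2 -sqrtr_sqr -sqrtrM ?sqr_ge0 // mulr_sumr.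
by congr Num.sqrt; apply: eq_bigr => i _; rewrite mxE exprMn.
Qed.

Lemma norm2_0 d : norm2 (0 : 'rV[R]_d) = 0.
Proof. by rewrite -(scale0r (0 : 'rV[R]_d)) norm2_scale normr0 mul0r. Qed.

Lemma norm2_ge0 d (v : 'rV[R]_d) : 0 <= norm2 v.
Proof. exact: sqrtr_ge0. Qed.

Lemma norm2_sum_disj d (r : seq nat) (F : nat -> 'rV[R]_d) : uniq r ->
  {in r &, forall i k, i != k -> F i = 0 \/ F k = 0} ->
  norm2 (\sum_(i <- r) F i) = \sum_(i <- r) norm2 (F i).
Proof.
elim: r => [|x r IH] /=; first by rewrite !big_nil norm2_0.
move=> /andP[xr ur] Hd; rewrite !big_cons.
have Hd' : {in r &, forall i k, i != k -> F i = 0 \/ F k = 0}.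
  by move=> i k ir kr; apply: Hd; rewrite inE ?ir ?kr orbT.
case: (eqVneq (F x) 0) => Fx.
  by rewrite Fx add0r norm2_0 add0r IH.
have Hz : forall y, y \in r -> F y = 0.
  move=> y yr; have xy : x != y by apply: contraNneq xr => ->.
  case: (Hd x y (mem_head _ _) _ xy); first by rewrite inE yr orbT.
    by move=> /eqP; rewrite (negPf Fx).
  by [].
rewrite !big1_seq ?addr0 //.
  by move=> i /andP[_ ir]; rewrite Hz // norm2_0.
Qed.

Lemma final_arith (X c N : R) (h : nat) : 0 < X -> c = (Num.sqrt X)^-1 ->
  (h + h)%:R = X -> 0 <= N ->
  (Num.sqrt 2)^-1 * Num.sqrt ((c * N * 2) * ((h + h)%:R * (c * N))) = N.
Proof.
move=> X0 Hc HX N0; rewrite HX.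
have cX : c ^+ 2 * X = 1.
  rewrite Hc exprVn sqr_sqrtr ?ltW // mulVf //.
  by rewrite gt_eqF.
have -> : c * N * 2 * (X * (c * N)) = 2 * N ^+ 2 * (c ^+ 2 * X) by ring.
rewrite cX mulr1 sqrtrM ?sqrtr_sqr ?ger0_norm ?mulKf //.
  by rewrite gt_eqF // sqrtr_gt0 ltr0n.
Qed.

End Aux.

Lemma blockE (j l : nat) : (1 <= j)%N -> (1 <= l)%N ->
  (2 ^ j * l = 2 ^ j * (l - 1) + 2 ^ (j - 1) + 2 ^ (j - 1))%N.
Proof.
move=> hj hl.
have H2 : (2 ^ j = 2 ^ (j - 1) + 2 ^ (j - 1))%N.
  by case: j hj => // j' _; rewrite subn1 /= expnS mul2n addnn.
by rewrite -addnA -H2 -mulnSr subn1 prednK.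
Qed.

Lemma pow2E (R : realType) (j : nat) : (1 <= j)%N ->
  ((2 ^ (j - 1) + 2 ^ (j - 1))%:R : R) = 2 ^+ j.
Proof.
move=> hj.
have H2 : (2 ^ j = 2 ^ (j - 1) + 2 ^ (j - 1))%N.
  by case: j hj => // j' _; rewrite subn1 /= expnS mul2n addnn.
by rewrite -H2 natrX.
Qed.

Lemma hf_in (R : realType) a h t : hf R a h t != 0 -> (a + 1 <= t <= a + h + h)%N.
Proof.
rewrite /hf; case: ifP => H1; first by move=> _; lia.
case: ifP => H2; first by move=> _; lia.
by rewrite eqxx.
Qed.

Lemma block_stats (R : realType) (m d : nat) (u : nat -> 'rV[R]_d) (j l : nat) :
  (1 <= j <= m)%N -> (1 <= l <= 2 ^ (m - j))%N ->
  Sbar m u j l = (2 ^ (j - 1) + 2 ^ (j - 1))%:R *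
     ((Num.sqrt (2 ^+ j))^-1 * norm2 (uhat m u j l)) /\
  Pjl m u j l = (Num.sqrt (2 ^+ j))^-1 * norm2 (uhat m u j l) * 2.
Proof.
move=> /andP[hj hjm] /andP[hl hlm].
set c : R := (Num.sqrt (2 ^+ j))^-1.
have c0 : 0 <= c by rewrite invr_ge0 sqrtr_ge0.
set N := norm2 (uhat m u j l).
have E := blockE hj hl.
have h1 : (1 <= 2 ^ (j - 1))%N by rewrite expn_gt0.
have HT : (2 ^ j * l <= T m)%N.
  rewrite /T -(subnKC hjm) expnD leq_mul2l hlm orbT //.
split.
  rewrite /Sbar (eq_bigr (fun t => `|hf R (2 ^ j * (l - 1)) (2 ^ (j - 1)) t| * (c * N))); last first.
    move=> t _; rewrite /zdet norm2_scale /haarn haarE // normrM (ger0_norm c0).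
    by rewrite mulrCA mulrA.
  rewrite -mulr_suml hf_sum_abs //; first by rewrite addn1.
  by rewrite -E addn1 ltnS.
rewrite /Pjl. rewrite E.
rewrite (eq_bigr (fun t => `|hf R (2 ^ j * (l - 1)) (2 ^ (j - 1)) t.+1 -
      hf R (2 ^ j * (l - 1)) (2 ^ (j - 1)) t| * (c * N))); last first.
  move=> t _; rewrite /zdet -scalerBl norm2_scale /haarn !haarE // -mulrBr normrM (ger0_norm c0).
  by rewrite mulrCA mulrA.
by rewrite -mulr_suml hf_sum_diff // mulrC.
Qed.

Theorem lemma6 (R : realType) (m d : nat) (hd : (1 <= d)%N)
    (u : nat -> 'rV[R]_d) :
  (forall j l : nat, (1 <= j <= m)%N -> (1 <= l <= 2 ^ (m - j))%N ->
     norm2 (uhat m u j l) =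
       (Num.sqrt 2)^-1 * Num.sqrt (Pjl m u j l * Sbar m u j l)) /\
  (forall j : nat, (1 <= j <= m)%N ->
     \sum_(1 <= l < (2 ^ (m - j)).+1) norm2 (uhat m u j l) <=
       (Num.sqrt 2)^-1 * Num.sqrt (Pscale m u j * Sbar_scale m u j)).
Proof.
split.
  move=> j l hj hl; have [-> ->] := block_stats u hj hl.
  move: hj => /andP[hj _].
  apply/esym/(final_arith (X := 2 ^+ j)) => //; first by rewrite exprn_gt0.
    exact: pow2E.
  exact: norm2_ge0.
move=> j hjj; have /andP[hj hjm] := hjj.
set L := (2 ^ (m - j)).+1.
set c : R := (Num.sqrt (2 ^+ j))^-1.
have Hp : Pscale m u j = c * (\sum_(1 <= l < L) norm2 (uhat m u j l)) * 2.
  rewrite /Pscale mulr_sumr mulr_suml; apply: eq_big_nat => l hl.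
  by have [_ ->] := block_stats u hjj (l := l) hl.
have Hs : Sbar_scale m u j = (2 ^ (j - 1) + 2 ^ (j - 1))%:R *
     (c * (\sum_(1 <= l < L) norm2 (uhat m u j l))).
  rewrite /Sbar_scale /zscale.
  rewrite (eq_bigr (fun t => \sum_(1 <= l < L) norm2 (zdet m u j l t))); last first.
    move=> t _; apply: norm2_sum_disj; first by rewrite /index_iota iota_uniq.
    move=> l l'; rewrite !mem_index_iota => hl hl' nll'.
    move: hl hl' => /andP[hl1 _] /andP[hl1' _].
    rewrite /zdet /haarn !haarE //.
    case: (eqVneq (hf R (2 ^ j * (l - 1)) (2 ^ (j - 1)) t) 0) => [->|H1].
      by left; rewrite mulr0 scale0r.
    case: (eqVneq (hf R (2 ^ j * (l' - 1)) (2 ^ (j - 1)) t) 0) => [->|H2].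
      by right; rewrite mulr0 scale0r.
    exfalso; move/hf_in: H1; move/hf_in: H2.
    rewrite -!blockE // => /andP[a1 a2] /andP[b1 b2].
    case: (ltngtP l l') => hll; last by rewrite hll eqxx in nll'.
      have : (2 ^ j * l <= 2 ^ j * (l' - 1))%N.
        by rewrite leq_mul2l; apply/orP; right; lia.
      lia.
    have : (2 ^ j * l' <= 2 ^ j * (l - 1))%N.
      by rewrite leq_mul2l; apply/orP; right; lia.
    lia.
  rewrite exchange_big /= mulr_sumr mulr_sumr; apply: eq_big_nat => l hl.
  by have [<- _] := block_stats u hjj (l := l) hl.
rewrite Hp Hs (final_arith (X := 2 ^+ j)) //; first by rewrite exprn_gt0.
  exact: pow2E.
by apply: sumr_ge0 => l _; exact: norm2_ge0.
Qed.
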